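(* $\mathrm{Tv}(\mathbb{Z} \times \mathbb{R}^k,m) = 2(m-1)(k+1) +1$.
   Context: For $S\subseteq\mathbb{R}^d$ and an integer $m\geq 2$, the Tverberg number $\mathrm{Tv}(S,m)$ is the smallest positive integer $n$ such that any multiset of $n$ points in $S$ admits a partition into $m$ submultisets $A_1,\dots,A_m$ with $\left(\bigcap_{i=1}^m\mathrm{conv}(A_i)\right)\cap S\neq\varnothing$ (and $\mathrm{Tv}(S,m)=\infty$ if no such number exists). Here $k$ is a positive integer and $m\geq 2$. *)

(* Defs.v *)
From HB Require Import structures.
From mathcomp Require Import all_boot all_order all_algebra.
From mathcomp Require Import reals.
Set Implicit Arguments. Unset Strict Implicit. Unset Printing Implicit Defensive.
Import Order.TTheory GRing.Theory Num.Theory.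
Local Open Scope ring_scope.

(* A multiset of n points is an
   indexed family p : 'I_n -> 'rV_d (repetitions allowed).  A partition into
   m submultisets is an assignment f : 'I_n -> 'I_m (block j = f^-1(j)). *)

Definition in_conv_block {R : realType} {d n m : nat}
    (p : 'I_n -> 'rV[R]_d) (f : 'I_n -> 'I_m) (j : 'I_m) (x : 'rV[R]_d) : Prop :=
  exists lam : 'I_n -> R,
    (forall i, 0 <= lam i) /\
    (\sum_(i | f i == j) lam i = 1) /\
    x = \sum_(i | f i == j) lam i *: p i.

Definition tverberg_prop {R : realType} {d : nat} (S : 'rV[R]_d -> Prop)
    (m n : nat) : Prop :=
  forall p : 'I_n -> 'rV[R]_d, (forall i, S (p i)) ->
    exists f : 'I_n -> 'I_m, exists x : 'rV[R]_d,
      S x /\ forall j : 'I_m, in_conv_block p f j x.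

Definition Tv_eq {R : realType} {d : nat} (S : 'rV[R]_d -> Prop)
    (m N : nat) : Prop :=
  (0 < N)%N /\ tverberg_prop S m N /\
  forall n : nat, (0 < n)%N -> (n < N)%N -> ~ tverberg_prop S m n.

(* Z x R^k, as a subset of R^(k+1): first coordinate is an integer. *)
Definition ZxR {R : realType} (k : nat) : 'rV[R]_(k.+1) -> Prop :=
  fun x => exists z : int, x ord0 ord0 = z%:~R.

(* Main.v *)
Require Import Defs.
From HB Require Import structures.
From mathcomp Require Import all_boot all_order all_algebra.
From mathcomp Require Import reals.
From mathcomp Require Import all_classical all_reals all_analysis.
From mathcomp Require Import ring lra zify.
Import Order.TTheory GRing.Theory Num.Theory.
Import numFieldNormedType.Exports.
Set Implicit Arguments. Unset Strict Implicit. Unset Printing Implicit Defensive.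

Section Helpers.
Local Open Scope classical_set_scope.
Local Open Scope ring_scope.
Lemma fin_argmin (R : realType) (I : finType) (P : pred I) (F : I -> R) :
  (exists i, P i) -> exists2 i, P i & forall j, P j -> F i <= F j.
Proof.
move=> [i0 Pi0].
case: (@arg_minP _ _ I i0 P F Pi0) => i Pi H.
by exists i.
Qed.

Definition dot {R : realType} D (u w : 'rV[R]_D) : R := \sum_c u ord0 c * w ord0 c.
Definition norm2 {R : realType} D (u : 'rV[R]_D) : R := dot u u.

Section Dot.
Variables (R : realType) (D : nat).
Implicit Types u v w : 'rV[R]_D.
Lemma dotC u w : dot u w = dot w u.
Proof. by apply: eq_bigr => c _; rewrite mulrC. Qed.
Lemma dotDl u v w : dot (u + v) w = dot u w + dot v w.
Proof. by rewrite /dot -big_split; apply: eq_bigr => c _; rewrite mxE mulrDl. Qed.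
Lemma dotZl a u w : dot (a *: u) w = a * dot u w.
Proof. by rewrite /dot mulr_sumr; apply: eq_bigr => c _; rewrite mxE mulrA. Qed.
Lemma dotNl u w : dot (- u) w = - dot u w.
Proof. by rewrite -scaleN1r dotZl mulN1r. Qed.
Lemma dotBl u v w : dot (u - v) w = dot u w - dot v w.
Proof. by rewrite dotDl dotNl. Qed.
Lemma dot0l w : dot 0 w = 0.
Proof. by rewrite /dot big1 // => c _; rewrite mxE mul0r. Qed.
Lemma dotDr u v w : dot w (u + v) = dot w u + dot w v.
Proof. by rewrite dotC dotDl !(dotC w). Qed.
Lemma dotZr a u w : dot w (a *: u) = a * dot w u.
Proof. by rewrite dotC dotZl dotC. Qed.
Lemma dotBr u v w : dot w (u - v) = dot w u - dot w v.
Proof. by rewrite dotC dotBl !(dotC w). Qed.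
Lemma dot0r w : dot w 0 = 0.
Proof. by rewrite dotC dot0l. Qed.
Lemma dot_suml (I : finType) (P : pred I) (F : I -> 'rV[R]_D) w :
  dot (\sum_(i | P i) F i) w = \sum_(i | P i) dot (F i) w.
Proof. by apply: (big_morph (fun u => dot u w)); [move=> *; apply: dotDl | apply: dot0l]. Qed.
Lemma dot_sumr (I : finType) (P : pred I) (F : I -> 'rV[R]_D) w :
  dot w (\sum_(i | P i) F i) = \sum_(i | P i) dot w (F i).
Proof. by rewrite dotC dot_suml; apply: eq_bigr => i _; rewrite dotC. Qed.
Lemma norm2_ge0 u : 0 <= norm2 u.
Proof. by apply: sumr_ge0 => c _; rewrite -expr2 sqr_ge0. Qed.
Lemma norm2_eq0 u : norm2 u = 0 -> u = 0.
Proof.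
move=> /eqP; rewrite /norm2 /dot psumr_eq0 => [/allP H|c _]; last by rewrite -expr2 sqr_ge0.
apply/rowP => c; rewrite mxE; have := H c (mem_index_enum c).
by rewrite /= -expr2 sqrf_eq0 => /eqP.
Qed.
Lemma norm2_addZ p a w :
  norm2 (p + a *: w) = norm2 p + 2 * a * dot p w + a ^+ 2 * norm2 w.
Proof.
rewrite /norm2 !dotDl !dotDr !dotZl !dotZr (dotC w p); ring.
Qed.
End Dot.
Definition simp {R : realType} (I : finType) (l : I -> R) :=
  (forall i, 0 <= l i) /\ \sum_i l i = 1.
Definition comb {R : realType} D (I : finType) (l : I -> R) (t : I -> 'rV[R]_D) :=
  \sum_i l i *: t i.

Lemma sum_delta (R : realType) (V : lmodType R) (I : finType) (i : I) (F : I -> V) :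
  \sum_j (j == i)%:R *: F j = F i.
Proof.
rewrite (bigD1 i) //= eqxx scale1r big1 ?addr0 // => j /negbTE ->.
by rewrite scale0r.
Qed.

Lemma sum_deltaR (R : realType) (I : finType) (i : I) :
  \sum_j ((j == i)%:R : R) = 1.
Proof.
rewrite (bigD1 i) //= eqxx big1 ?addr0 // => j /negbTE ->. by [].
Qed.

Lemma descent (R : realType) D (I : finType) (t : I -> 'rV[R]_D) l i :
  simp l -> dot (comb l t) (t i - comb l t) < 0 ->
  exists l', simp l' /\ norm2 (comb l' t) < norm2 (comb l t).
Proof.
move=> [l0 l1]; set p := comb l t => neg.
set a := - dot p (t i - p); set b := norm2 (t i - p).
have a0 : 0 < a by rewrite oppr_gt0.
have b0 : 0 <= b by apply: norm2_ge0.
have ab0 : 0 < a + b by apply: ltr_wpDr.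
set s := a / (a + b).
have s0 : 0 < s by apply: divr_gt0.
have s1 : s <= 1 by rewrite ler_pdivrMr // mul1r lerDl.
have sb : s * b <= a.
  by rewrite /s mulrAC ler_pdivrMr // ler_pM2l // lerDr ltW.
pose l' := fun j : I => (1 - s) * l j + s * (j == i)%:R.
exists l'; split; first split.
- move=> j; apply: addr_ge0.
    by apply: mulr_ge0 => //; rewrite subr_ge0.
  by apply: mulr_ge0; [exact: ltW | case: (j == i)].
- by rewrite big_split /= -!mulr_sumr l1 sum_deltaR; ring.
have -> : comb l' t = p + s *: (t i - p).
  rewrite /comb /l'.
  under eq_bigr do rewrite scalerDl.
  rewrite big_split /=.
  under eq_bigr do rewrite -scalerA.
  rewrite -scaler_sumr.
  under [X in _ + X = _]eq_bigr do rewrite -scalerA.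
  rewrite -scaler_sumr sum_delta -/(comb l t) -/p.
  by rewrite scalerBl scale1r scalerBr -addrA [- _ + _]addrC.
rewrite (norm2_addZ p s (t i - p)) -/b.
have -> : dot p (t i - p) = - a by rewrite opprK.
have : s * (s * b - 2 * a) < 0.
  rewrite pmulr_rlt0 // subr_lt0; apply: le_lt_trans sb _.
  by rewrite ltr_pMl // ltr1n.
move=> H; nra.
Qed.

Lemma kernel_vec (R : realType) D (t : 'I_D.+1 -> 'rV[R]_D) :
  exists mu : 'I_D.+1 -> R, (exists i, mu i != 0) /\ \sum_i mu i *: t i = 0.
Proof.
pose T := \matrix_(i, c) t i ord0 c.
pose K := kermx T.
have rK : (0 < \rank K)%N.
  rewrite mxrank_ker subn_gt0; apply: leq_ltn_trans (rank_leq_col T) _; exact: ltnSn.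
have [j Hj] : exists j, row j K != 0.
  apply/existsP; apply: contraTT rK; rewrite negb_exists => /forallP H.
  have -> : K = 0 by apply/row_matrixP => j; rewrite row0; apply/eqP; move/negPn: (H j).
  by rewrite mxrank0.
have [i Hi] : exists i, row j K ord0 i != 0.
  apply/existsP; apply: contraTT Hj; rewrite negb_exists => /forallP H.
  apply/negPn/eqP/rowP => i; rewrite [RHS]mxE; apply/eqP; exact: negPn (H i).
exists (fun i => row j K ord0 i); split; first by exists i.
have KT : row j K *m T = 0 by rewrite -row_mul mulmx_ker row0.
apply/rowP => c; have := congr1 (fun M : 'M[R]_(1, D) => M ord0 c) KT; rewrite !mxE => <-.
rewrite summxE; apply: eq_bigr => i' _; rewrite !mxE.
by [].
Qed.

Lemma carath (R : realType) D (t : 'I_D.+1 -> 'rV[R]_D) l :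
  simp l -> 0 < norm2 (comb l t) ->
  (forall i, 0 <= dot (comb l t) (t i - comb l t)) ->
  exists l', [/\ simp l', comb l' t = comb l t & exists i0, l' i0 = 0].
Proof.
move=> [l0 l1] np H; set p := comb l t in np H *.
case: (boolP [exists i, l i == 0]) => [/existsP [i /eqP li]|].
  by exists l; split => //; exists i.
rewrite negb_exists => /forallP lpos.
have lp : forall i, 0 < l i by move=> i; rewrite lt_def lpos l0.
have eqd : forall i, dot p (t i) = norm2 p.
  have S0 : \sum_i l i * dot p (t i - p) = 0.
    under eq_bigr do rewrite dotBr.
    under eq_bigr do rewrite mulrBr.
    rewrite sumrB -mulr_suml l1 mul1r.
    rewrite /norm2; apply/eqP; rewrite subr_eq0; apply/eqP.
    rewrite {3}/p /comb dot_sumr; apply: eq_bigr => i _; by rewrite dotZr.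
  move=> i; have /psumr_eq0P Z := S0.
  have : l i * dot p (t i - p) = 0.
    apply: Z => // j _; apply: mulr_ge0; [exact: l0 | exact: H].
  move/eqP; rewrite mulf_eq0 (negbTE (lpos i)) /= dotBr subr_eq0 => /eqP.
  by [].
have [mu [[i1 mui1] muk]] := kernel_vec t.
have smu : \sum_i mu i = 0.
  have : dot p (\sum_i mu i *: t i) = 0 by rewrite muk dot0r.
  rewrite dot_sumr.
  under eq_bigr do rewrite dotZr eqd.
  rewrite -mulr_suml => /eqP; rewrite mulf_eq0 => /orP [/eqP //|].
  by rewrite (gt_eqF np).
have [i2 mui2] : exists i, 0 < mu i.
  apply: contra_notP (negP mui1) => /forallNP Hn.
  have mle : forall i, mu i <= 0 by move=> i; rewrite leNgt; apply/negP/Hn.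
  have : \sum_i (- mu i) = 0 by rewrite sumrN smu oppr0.
  move/psumr_eq0P => Z.
  by rewrite -oppr_eq0; apply/eqP; apply: Z => // i _; rewrite oppr_ge0.
have [i0 mui0 i0min] := @fin_argmin R _ (fun i => 0 < mu i) (fun i => l i / mu i) (ex_intro _ i2 mui2).
set s := l i0 / mu i0.
have s0 : 0 <= s by apply: divr_ge0; [exact: l0 | exact: ltW].
exists (fun j => l j - s * mu j); split.
- split.
    move=> j; rewrite subr_ge0.
    case: (ltP 0 (mu j)) => mj.
      by rewrite -ler_pdivlMr //; apply: i0min.
    by apply: le_trans (l0 j); apply: mulr_ge0_le0.
  by rewrite sumrB -mulr_sumr smu mulr0 subr0.
- rewrite /comb.
  under eq_bigr do rewrite scalerBl -scalerA.
  by rewrite sumrB -scaler_sumr muk scaler0 subr0.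
- by exists i0; rewrite /s divfK ?subrr // gt_eqF.
Qed.

Definition simplexv {R : realType} n (v : 'rV[R]_n) : Prop :=
  (forall i, 0 <= v ord0 i) /\ \sum_i v ord0 i = 1.

Lemma simplex_min (R : realType) n (h : 'rV[R]_n.+1 -> R) :
  continuous h -> exists2 v, simplexv v & forall w, simplexv w -> h v <= h w.
Proof.
move=> hc.
set A := [set v : 'rV[R]_n.+1 | simplexv v]%classic.
have A0 : (A !=set0)%classic.
  exists (\row_i (if i == ord0 then 1 else 0)); split.
    by move=> i; rewrite !mxE; case: (i == ord0).
  rewrite big_ord_recl /= mxE eqxx big1 ?addr0 // => i _.
  by rewrite mxE.
have cA : compact A.
  apply: (@subclosed_compact _ _ [set v : 'rV[R]_n.+1 | forall i, `[(0:R), 1]%classic (v ord0 i)]%classic).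
  - have -> : A = ((\bigcap_(i in setT) [set v : 'rV[R]_n.+1 | 0 <= v ord0 i])
        `&` ((fun v : 'rV[R]_n.+1 => \sum_i v ord0 i) @^-1` [set 1]))%classic.
      apply/seteqP; split => v.
        by move=> [H1 H2]; split => //= i _; exact: H1.
      by move=> [H1 H2]; split => //= i; apply: H1.
    apply: closedI.
      apply: closed_bigI => i _.
      apply: (@preimage_closed _ _ (fun v : 'rV[R]_n.+1 => v ord0 i) [set x | 0 <= x]%classic).
        by move=> x _; apply: coord_continuous.
      exact: closed_ge.
    apply: (@preimage_closed _ _ (fun v : 'rV[R]_n.+1 => \sum_i v ord0 i) [set 1]%classic); last exact: closed_eq.
    move=> x _; apply: (@continuous_big _ _ +%R 0 predT add_continuous _ (index_enum _)) => i _.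
    exact: coord_continuous.
  - by apply: (@rV_compact _ _ (fun=> `[(0:R), 1]%classic)) => i; exact: segment_compact.
  - move=> v [H1 H2] i /=; rewrite in_itv /= H1 /= -H2.
    rewrite (bigD1 i) //= lerDl sumr_ge0 // => j _; exact: H1.
have hcA : {within A, continuous h} by apply: continuous_subspaceT.
have [v Av vmin] := EVT_min_rV A0 cA hcA.
exists v; first by move: Av; rewrite inE.
by move=> w Aw; apply: vmin; rewrite inE.
Qed.

Lemma cont_h (R : realType) D n (t : 'I_n -> 'rV[R]_D) :
  continuous (fun v : 'rV[R]_n => norm2 (\sum_i v ord0 i *: t i)).
Proof.
have -> : (fun v : 'rV[R]_n => norm2 (\sum_i v ord0 i *: t i)) =
   (fun v => \sum_c ((\sum_i v ord0 i * t i ord0 c) * (\sum_i v ord0 i * t i ord0 c))).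
  apply: funext => v; rewrite /norm2 /dot; apply: eq_bigr => c _.
  by rewrite summxE; under eq_bigr do rewrite mxE.
apply: (@continuous_big _ _ +%R 0 predT add_continuous _ (index_enum _)) => c _.
have gc : continuous (fun v : 'rV[R]_n => \sum_i v ord0 i * t i ord0 c).
  apply: (@continuous_big _ _ +%R 0 predT add_continuous _ (index_enum _)) => i _.
  move=> x; apply: continuousM; first exact: coord_continuous.
  exact: cst_continuous.
by move=> x; apply: continuousM; apply: gc.
Qed.

Lemma min_comb (R : realType) D n (t : 'I_n.+1 -> 'rV[R]_D) :
  exists l, simp l /\ forall l', simp l' -> norm2 (comb l t) <= norm2 (comb l' t).
Proof.
have [v [v0 v1] vmin] := @simplex_min R n _ (@cont_h R D n.+1 t).
exists (fun i => v ord0 i); split => // l' [l0 l1].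
have E : \sum_i (\row_i l' i) ord0 i *: t i = comb l' t.
  by rewrite /comb; apply: eq_bigr => i _; rewrite mxE.
rewrite -E; apply: vmin; split; first by move=> i; rewrite mxE.
by under eq_bigr do rewrite mxE.
Qed.

Lemma colorful (R : realType) D K (c : 'I_D.+1 -> 'I_K -> 'rV[R]_D) :
  (forall i, exists mu, simp mu /\ comb mu (c i) = 0) ->
  exists g : 'I_D.+1 -> 'I_K, exists l, simp l /\ comb l (fun i => c i (g i)) = 0.
Proof.
move=> H.
have [k0] : exists k0 : 'I_K, True.
  have [mu [[_ mu1] _]] := H ord0.
  case: K c H mu mu1 => [|K] c H mu mu1; last by exists ord0.
  by move: mu1; rewrite big_ord0 => /eqP; rewrite eq_sym oner_eq0.
move=> _.
pose G := {ffun 'I_D.+1 -> 'I_K}.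
pose pts (g : G) := fun i => c i (g i).
have Hd : forall g : G, exists r : R, (exists l, simp l /\ norm2 (comb l (pts g)) = r) /\
    forall l', simp l' -> r <= norm2 (comb l' (pts g)).
  move=> g; have [l [sl lmin]] := min_comb (pts g).
  by exists (norm2 (comb l (pts g))); split => //; exists l.
have [d dP] := choice Hd.
have [g0 _ g0min] := @fin_argmin R G predT d (ex_intro _ [ffun=> k0] isT).
have [[l0 [sl0 l0d]] _] := dP g0.
set t0 := pts g0 in l0d.
set p := comb l0 t0 in l0d.
case: (eqVneq (norm2 p) 0) => [/norm2_eq0 p0|np0].
  by exists g0, l0.
have np : 0 < norm2 p by rewrite lt_def np0 norm2_ge0.
have H1 : forall i, 0 <= dot p (t0 i - p).
  move=> i; rewrite leNgt; apply/negP => neg.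
  have [l' [sl' lt']] := descent sl0 neg.
  have := (dP g0).2 l' sl'; rewrite -l0d.
  by rewrite leNgt lt'.
have [ls [sls combs [i0 lsi0]]] := carath sl0 np H1.
have [mu [[mu0 mu1] muc]] := H i0.
have [jm _ jmmin] := @fin_argmin R _ predT (fun j => dot p (c i0 j)) (ex_intro _ k0 isT).
have jneg : dot p (c i0 jm) <= 0.
  have : dot p (comb mu (c i0)) = 0 by rewrite muc dot0r.
  rewrite /comb dot_sumr => <-.
  have -> : dot p (c i0 jm) = \sum_j mu j * dot p (c i0 jm) by rewrite -mulr_suml mu1 mul1r.
  apply: ler_sum => j _; rewrite dotZr; apply: ler_wpM2l => //; exact: jmmin.
pose g' : G := [ffun i => if i == i0 then jm else g0 i].
have pg'0 : pts g' i0 = c i0 jm by rewrite /pts ffunE eqxx.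
have combg' : comb ls (pts g') = p.
  transitivity (comb ls t0); last exact: combs.
  apply: eq_bigr => i _; rewrite /pts ffunE.
  case: (eqVneq i i0) => [->|//]; by rewrite lsi0 !scale0r.
have neg' : dot (comb ls (pts g')) (pts g' i0 - comb ls (pts g')) < 0.
  rewrite combg' pg'0 dotBr -/(norm2 p) subr_lt0.
  exact: le_lt_trans jneg np.
have [l'' [sl'' lt'']] := descent sls neg'.
rewrite combg' l0d in lt''.
have := le_trans (g0min g' isT) ((dP g') .2 l'' sl'').
by rewrite leNgt lt''.
Qed.

Lemma core (R : realType) d' m' (a : 'I_((d' * m').+1) -> 'rV[R]_d') (r0 : 'I_d') :
  (forall i, a i ord0 r0 = 1) ->
  exists g : 'I_((d' * m').+1) -> 'I_m'.+1, exists lam : 'I_((d' * m').+1) -> R,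
  exists u : 'rV[R]_d',
    [/\ (forall i, 0 <= lam i), u ord0 r0 = 1 &
        forall j, \sum_(i | g i == j) lam i *: a i = u].
Proof.
move=> ar0.
pose w (j : 'I_m'.+1) : 'rV[R]_m' :=
  \row_s ((j == widen_ord (leqnSn m') s)%:R - (j == ord_max)%:R).
pose c i j := mxvec ((a i)^T *m w j).
have sumw : \sum_j w j = 0.
  apply/rowP => s; rewrite summxE [RHS]mxE /w.
  rewrite (eq_bigr (fun k => (k == widen_ord (leqnSn m') s)%:R - (k == ord_max)%:R)); last first.
    by move=> k _; rewrite mxE.
  by rewrite sumrB !sum_deltaR subrr.
set mm : R := (m'.+1)%:R.
have mm0 : mm != 0 by rewrite /mm pnatr_eq0.
have [g [l [[l0 l1] Hl]]] : exists g : 'I_((d' * m').+1) -> 'I_m'.+1, exists l,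
    simp l /\ comb l (fun i => c i (g i)) = 0.
  apply: colorful => i.
  exists (fun=> mm^-1); split; first split.
  - by move=> _; rewrite invr_ge0 /mm ler0n.
  - by rewrite sumr_const card_ord -mulr_natr mulVf.
  rewrite /comb -scaler_sumr /c -linear_sum -mulmx_sumr sumw mulmx0.
  by rewrite linear0 scaler0.
pose M := \sum_i l i *: ((a i)^T *m w (g i)).
have M0 : M = 0.
  apply: (can_inj (@mxvecK _ _ _)); rewrite linear0 /M linear_sum.
  transitivity (comb l (fun i => c i (g i))); last exact: Hl.
  rewrite /comb /c; apply: eq_bigr => i _; by rewrite linearZ.
pose U j r := \sum_(i | g i == j) l i * a i ord0 r.
have MU : forall r s, M r s = U (widen_ord (leqnSn m') s) r - U ord_max r.
  move=> r s; rewrite /M summxE /U !(big_mkcond (fun i => g i == _)) -sumrB.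
  apply: eq_bigr => i _; rewrite /w !mxE big_ord1 !mxE.
  case: (g i == widen_ord _ s); case: (g i == ord_max) => /=; ring.
have Ueq : forall j r, U j r = U ord_max r.
  move=> j r; case: (ltnP j m') => jm.
    have -> : j = widen_ord (leqnSn m') (Ordinal jm) by apply: val_inj.
    by apply/eqP; rewrite -subr_eq0 -MU M0 mxE.
  have -> // : j = ord_max.
  by apply: val_inj => /=; apply/eqP; rewrite eqn_leq jm -ltnS ltn_ord.
have sumU : forall r, \sum_j U j r = \sum_i l i * a i ord0 r.
  by move=> r; rewrite /U (partition_big g predT).
exists g, (fun i => mm * l i), (mm *: \row_r U ord_max r); split.
- by move=> i; apply: mulr_ge0 => //; rewrite /mm ler0n.
- have E1 : \sum_j U j r0 = mm * U ord_max r0.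
    rewrite (eq_bigr (fun=> U ord_max r0)); last by move=> j _; exact: (Ueq j r0).
    by rewrite sumr_const card_ord -mulr_natr mulrC.
  rewrite !mxE -E1 sumU.
  by under eq_bigr do rewrite ar0 mulr1.
- move=> j; apply/rowP => r; rewrite summxE !mxE -(Ueq j r) /U mulr_sumr.
  by apply: eq_bigr => i _; rewrite mxE mulrA.
Qed.

Lemma ce (R : realType) k m' n (e : 'I_n -> (bool * 'I_k.+1) * 'I_m') :
  injective e ->
  let p := fun l => \row_c (if c == ord0 then ((e l).1.1)%:R else (((e l).1.2 == c)%:R : R)) in
  ~ exists f : 'I_n -> 'I_m'.+1, exists x : 'rV[R]_k.+1,
      ZxR x /\ forall j, in_conv_block p f j x.
Proof.
move=> einj p [f [x [[z xz] H]]].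
set b := fun l => (((e l).1.1)%:R : R).
have px0 : forall l, p l ord0 ord0 = b l by move=> l; rewrite mxE eqxx.
have pxv : forall l v, v != ord0 -> p l ord0 v = ((e l).1.2 == v)%:R.
  by move=> l v /negbTE vn; rewrite mxE vn.
have b01 : forall l, 0 <= b l <= 1 by move=> l; rewrite /b; case: (e l).1.1 => /=; rewrite ?lexx ?ler01.
have x0j : forall j lam, (forall i, 0 <= lam i) -> \sum_(i | f i == j) lam i = 1 ->
    x = \sum_(i | f i == j) lam i *: p i -> x ord0 ord0 = \sum_(i | f i == j) lam i * b i.
  move=> j lam _ _ ->; rewrite summxE; apply: eq_bigr => i _; by rewrite mxE px0.
have [lam0 [l00 [l01 lx0]]] := H ord0.
have z01 : z = 0 \/ z = 1.
  have : 0 <= x ord0 ord0 <= 1.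
    rewrite (x0j _ _ l00 l01 lx0); apply/andP; split.
      by apply: sumr_ge0 => i _; apply: mulr_ge0 => //; case/andP: (b01 i).
    rewrite -l01; apply: ler_sum => i _; rewrite -[X in _ <= X]mulr1.
    by apply: ler_wpM2l => //; case/andP: (b01 i).
  rewrite xz ler0z => /andP [z0 z1]. 
  have z1' : (z <= 1)%R by rewrite -(ler_int R).
  lia.
have layer : forall j lam l, (forall i, 0 <= lam i) -> \sum_(i | f i == j) lam i = 1 ->
    x = \sum_(i | f i == j) lam i *: p i -> f l == j -> 0 < lam l -> b l = x ord0 ord0.
  move=> j lam l l0 l1 lx fl lp; have X := x0j _ _ l0 l1 lx.
  case: z01 => zv; rewrite xz zv /= in X *.
  - have : \sum_(i | f i == j) lam i * b i == 0 by rewrite -X.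
    rewrite psumr_eq0; last by move=> i _; apply: mulr_ge0 => //; case/andP: (b01 i).
    move=> /allP/(_ l (mem_index_enum l)); rewrite fl /= mulf_eq0 (gt_eqF lp) /=.
    by move/eqP.
  - have : \sum_(i | f i == j) lam i * (1 - b i) == 0.
      by under eq_bigr do rewrite mulrBr mulr1; rewrite sumrB l1 -X subrr.
    rewrite psumr_eq0; last first.
      by move=> i _; apply: mulr_ge0 => //; rewrite subr_ge0; case/andP: (b01 i).
    move=> /allP/(_ l (mem_index_enum l)); rewrite fl /= mulf_eq0 (gt_eqF lp) /=.
    by rewrite subr_eq0 => /eqP.
pose beta v := if v == ord0 then 1 - \sum_(v' | v' != ord0) x ord0 v' else x ord0 v.
have W : forall j lam, (forall i, 0 <= lam i) -> \sum_(i | f i == j) lam i = 1 ->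
    x = \sum_(i | f i == j) lam i *: p i -> forall v,
    \sum_(i | (f i == j) && ((e i).1.2 == v)) lam i = beta v.
  move=> j lam l0 l1 lx.
  have Wv : forall v, v != ord0 -> \sum_(i | (f i == j) && ((e i).1.2 == v)) lam i = x ord0 v.
    move=> v vn; rewrite lx summxE big_mkcondr /=; apply: eq_bigr => i _.
    rewrite mxE pxv //; case: ((e i).1.2 == v) => /=; by rewrite ?mulr1 ?mulr0.
  move=> v; rewrite /beta; case: (eqVneq v ord0) => [->|vn]; last exact: Wv.
  have T : \sum_(i | f i == j) lam i =
      \sum_v \sum_(i | (f i == j) && ((e i).1.2 == v)) lam i.
    by rewrite (partition_big (fun i => (e i).1.2) predT).
  rewrite -[in RHS]l1 T [in RHS](bigD1 ord0) //=.
  by rewrite (eq_bigr (fun v => x ord0 v)) ?addrK // => v' vn'; exact: Wv.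
have S : \sum_v beta v = 1.
  rewrite -l01 (partition_big (fun i => (e i).1.2) predT) //=.
  by apply: eq_bigr => v _; rewrite -(W _ _ l00 l01 lx0 v).
have [v0 bv0] : exists v, 0 < beta v.
  case: (pselect (exists v, 0 < beta v)) => // Hn; exfalso.
  have : \sum_v beta v <= \sum_(v : 'I_k.+1) (0:R).
    apply: ler_sum => v _; rewrite leNgt; apply/negP => bp; apply: Hn; exists v.
    exact: bp.
  by rewrite big1_eq S ler10.
have pick : forall j, exists l, [/\ f l == j, (e l).1.2 == v0 & b l = x ord0 ord0].
  move=> j; have [lam [l0 [l1 lx]]] := H j.
  have Wj := W _ _ l0 l1 lx v0.
  case: (pselect (exists l, (f l == j) && ((e l).1.2 == v0) && (0 < lam l))) => [[l /andP [/andP [fl el] lp]]|Hn].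
    by exists l; split => //; exact: (layer _ _ _ l0 l1 lx fl lp).
  exfalso; move: bv0; rewrite -Wj big1 ?ltxx // => i /andP [fi ei].
  apply/eqP; rewrite eq_le l0 andbT leNgt; apply/negP => lp; apply: Hn.
  by exists i; rewrite fi ei lp.
have [h hP] := choice pick.
have hinj : injective (fun j => (e (h j)).2).
  move=> j1 j2 /= E.
  have [f1 e1 b1] := hP j1; have [f2 e2 b2] := hP j2.
  have El : h j1 = h j2.
    apply: einj; move: E b1 b2 e1 e2; rewrite /b.
    case: (e (h j1)) => [[c1 v1] w1]; case: (e (h j2)) => [[c2 v2] w2] /= -> <-.
    move=> /eqP; rewrite eqr_nat => /eqP c12 /eqP -> /eqP ->.
    by congr (_, _, _); case: c1 c2 c12 => [] [].
  by rewrite -(eqP f1) -(eqP f2) El.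
have := leq_card _ hinj; rewrite !card_ord ltnn.
by [].
Qed.

Lemma pairing (R : realType) D (z : 'I_(D + D).+1 -> R) :
  exists (pi : 'I_(D + D).+1 -> 'I_D.+1) (lo hi : 'I_D.+1 -> 'I_(D + D).+1)
         (t0 : 'I_(D + D).+1),
    (forall i, z (lo i) <= z t0 /\ z t0 <= z (hi i)) /\
    (forall i, pi (lo i) = i /\ pi (hi i) = i).
Proof.
pose r := fun a b : 'I_(D + D).+1 => z a <= z b.
pose s := sort r (enum 'I_(D + D).+1).
have ss : size s = (D + D).+1 by rewrite size_sort size_enum_ord.
have us : uniq s by rewrite sort_uniq enum_uniq.
have rtot : total r by move=> a b; apply: le_total.
have rtr : transitive r by move=> a b c; apply: le_trans.
have rrefl : reflexive r by move=> a; apply: lexx.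
have sos : sorted r s by apply: sort_sorted.
have mono : forall i j, (i <= j)%N -> (j < (D + D).+1)%N -> r (nth ord0 s i) (nth ord0 s j).
  move=> i j ij jN; apply: (sorted_leq_nth rtr rrefl) => //; rewrite inE ss //.
  exact: leq_ltn_trans ij jN.
pose pi := fun l : 'I_(D + D).+1 =>
  let q := index l s in if (q <= D)%N then (inord q : 'I_D.+1) else inord (D + D - q).
have iD : forall i : 'I_D.+1, (i <= D)%N by move=> i; rewrite -ltnS.
have iN : forall i : 'I_D.+1, (i < (D + D).+1)%N.
  by move=> i; rewrite ltnS; apply: leq_trans (iD i) (leq_addr _ _).
have hN : forall i : 'I_D.+1, (D + D - i < (D + D).+1)%N by move=> i; rewrite ltnS leq_subr.
exists pi, (fun i => nth ord0 s i), (fun i => nth ord0 s (D + D - i)), (nth ord0 s D).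
split => i; have Hi := iD i.
  split; apply: mono => //; lia.
split.
  rewrite /pi index_uniq ?ss // Hi; apply: val_inj; rewrite /= inordK //.
rewrite /pi index_uniq ?ss //.
case: ifP => H.
  by apply: val_inj; rewrite /= inordK; lia.
by apply: val_inj; rewrite /= inordK; lia.
Qed.

Lemma alpha_facts (R : realType) (a b t : R) : a <= t -> t <= b ->
  let al := if a == b then 1 else (b - t) / (b - a) in
  [/\ 0 <= al, al <= 1 & al * a + (1 - al) * b = t].
Proof.
move=> Hat tb al; rewrite /al; case: eqP => [ab|/eqP ab].
  split => //; last by rewrite mul1r subrr mul0r addr0; apply/eqP; rewrite eq_le Hat /= ab.
have ba : 0 < b - a by rewrite subr_gt0 lt_def eq_sym ab (le_trans Hat tb).
split.
- by apply: divr_ge0; [rewrite subr_ge0 | exact: ltW].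
- by rewrite ler_pdivrMr // mul1r lerD2l lerN2.
- by field; rewrite subr_eq0 eq_sym.
Qed.

Lemma regroup (V : zmodType) n M m (pi : 'I_n -> 'I_M) (g : 'I_M -> 'I_m) j
    (F : 'I_n -> V) :
  \sum_(l | g (pi l) == j) F l = \sum_(i | g i == j) \sum_(l | pi l == i) F l.
Proof.
rewrite (partition_big pi (fun i => g i == j)) //.
apply: eq_bigr => i /eqP gi; apply: eq_bigl => l.
by case: (eqVneq (pi l) i) => [->|]; rewrite ?gi ?eqxx ?andbF.
Qed.

Lemma fiber_sum (V : zmodType) n M (pi : 'I_n -> 'I_M) i (F : 'I_n -> V) :
  (forall l, pi l != i -> F l = 0) -> \sum_(l | pi l == i) F l = \sum_l F l.
Proof.
move=> H; rewrite big_mkcond /=; apply: eq_bigr => l _.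
by case: eqVneq => // /H ->.
Qed.

Lemma ub (R : realType) k m' :
  tverberg_prop (@ZxR R k) m'.+1 (k.+1 * m' + k.+1 * m').+1.
Proof.
set D := k.+1 * m'.
move=> p Hp.
pose z := fun l => p l ord0 ord0.
have [pi [lo [hi [t0 [Hz Hpi]]]]] := pairing z.
set t := z t0.
have [zt zint] := Hp t0.
pose al i := if z (lo i) == z (hi i) then 1 else (z (hi i) - t) / (z (hi i) - z (lo i)).
have Hal : forall i, [/\ 0 <= al i, al i <= 1 & al i * z (lo i) + (1 - al i) * z (hi i) = t].
  by move=> i; case: (Hz i) => h1 h2; exact: alpha_facts.
pose y i := al i *: p (lo i) + (1 - al i) *: p (hi i).
pose e0 : 'rV[R]_k.+1 := \row_c ((c == ord0)%:R).
pose yh i := y i + (1 - t) *: e0.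
have yh0 : forall i, yh i ord0 ord0 = 1.
  move=> i; rewrite /yh /y !mxE eqxx mulr1.
  by have [_ _ ->] := Hal i; rewrite addrC subrK.
have [g [lam [u [lam0 u0 Hu]]]] := @core R k.+1 m' yh ord0 yh0.
pose W i l := al i * (l == lo i)%:R + (1 - al i) * (l == hi i)%:R.
have W0 : forall i l, 0 <= W i l.
  move=> i l; have [a0 a1 _] := Hal i; apply: addr_ge0; apply: mulr_ge0 => //.
  by rewrite subr_ge0.
have Woff : forall i l, pi l != i -> W i l = 0.
  move=> i l pl; have [h1 h2] := Hpi i; rewrite /W.
  have -> : (l == lo i) = false by apply/negP => /eqP E; move: pl; rewrite E h1 eqxx.
  have -> : (l == hi i) = false by apply/negP => /eqP E; move: pl; rewrite E h2 eqxx.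
  by rewrite !mulr0 addr0.
have Wsum : forall i, \sum_l W i l = 1.
  move=> i; rewrite big_split /= -!mulr_sumr !sum_deltaR; ring.
have Wcomb : forall i, \sum_l W i l *: p l = y i.
  move=> i; rewrite /W.
  under eq_bigr do rewrite scalerDl -!scalerA.
  by rewrite big_split /= -!scaler_sumr !sum_delta.
exists (fun l => g (pi l)), (u + (t - 1) *: e0); split.
  by exists zt; rewrite !mxE eqxx u0 mulr1 addrC subrK.
move=> j.
have lsum : \sum_(i | g i == j) lam i = 1.
  rewrite -u0 -(Hu j) summxE; apply: eq_bigr => i _; by rewrite mxE yh0 mulr1.
exists (fun l => lam (pi l) * W (pi l) l); split.
  by move=> l; apply: mulr_ge0.
split.
  rewrite regroup -lsum; apply: eq_bigr => i _.
  rewrite (eq_bigr (fun l => lam i * W i l)); last by move=> l /eqP ->.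
  rewrite (@fiber_sum _ _ _ pi i (fun l => lam i * W i l)); last by move=> l /Woff ->; rewrite mulr0.
  by rewrite -mulr_sumr Wsum mulr1.
rewrite regroup.
transitivity (\sum_(i | g i == j) lam i *: y i).
  rewrite -(Hu j) /yh.
  under eq_bigr do rewrite scalerDr.
  rewrite big_split /= -scaler_suml lsum scale1r addrC -addrA.
  rewrite addrCA -scalerDl.
  have -> : (1 - t) + (t - 1) = 0 by ring.
  by rewrite scale0r addr0.
apply: eq_bigr => i _; rewrite -Wcomb scaler_sumr.
rewrite [RHS](eq_bigr (fun l => (lam i * W i l) *: p l)); last by move=> l /eqP ->.
rewrite (@fiber_sum _ _ _ pi i (fun l => (lam i * W i l) *: p l)); last by move=> l /Woff ->; rewrite mulr0 scale0r.
by apply: eq_bigr => l _; rewrite scalerA.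
Qed.
End Helpers.

Unset Implicit Arguments.

Theorem mainTheorem6 (R : realType) (k m : nat) :
  (0 < k)%N -> (2 <= m)%N ->
  Tv_eq (@ZxR R k) m (2 * (m - 1) * (k + 1) + 1).
Proof.
move=> _; case: m => [|[|m']] // _.
have E : (2 * (m'.+2 - 1) * (k + 1) + 1 = (k.+1 * m'.+1 + k.+1 * m'.+1).+1)%N.
  rewrite subn1 /=; nia.
rewrite E; split => //; split; first exact: ub.
move=> n _ nN tv.
pose T := ((bool * 'I_k.+1) * 'I_m'.+1)%type.
have cT : #|{: T}| = (k.+1 * m'.+1 + k.+1 * m'.+1)%N.
  by rewrite !card_prod card_bool !card_ord addnn -mul2n mulnA.
have Hn : (n <= #|{: T}|)%N by rewrite cT -ltnS.
pose e := fun l : 'I_n => (enum_val (widen_ord Hn l) : T).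
have einj : injective e.
  move=> l1 l2 /enum_val_inj /(congr1 val) /= H; exact: val_inj.
apply: (@ce R k m'.+1 n e einj) => /=.
apply: tv => l.
rewrite /ZxR mxE eqxx.
by case: (e l).1.1; [exists 1%R | exists 0%R].
Qed.
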